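(* Let $\mathbf z=(z_i)_{i=1}^N$ be a crystal. Then for every $\mathbf h=(h_i)_{i=1}^N\in(\mathbb R^d)^N$, $$(\mathbf h,\mathrm{Hess}H(\mathbf z)\mathbf h)=\frac{\check c}{a^2}\sum_{\langle i,j\rangle}(h_i-h_j,z_i-z_j)^2\ge0,$$ where the sum is over all pairs $\{i,j\}$ with $|z_i-z_j|=a$.
   Context: Let $d\ge1$ and $U\in C^3_0(\mathbb R)$ even, with a unique $a>0$ such that $U(a)=\min_{r\ge0}U(r)$, and $\check c:=U''(a)>0$; $U(x)=U(|x|)$ for $x\in\mathbb R^d$; $b=\inf\{r>0:U(s)=0\text{ for all }s>r\}$. $H(\mathbf x)=\sum_{1\le i<j\le N}U(x_i-x_j)$ for $\mathbf x\in(\mathbb R^d)^N$. A crystal is $\mathbf z\in(\mathbb R^d)^N$ such that for every $i\ne j$, $|z_i-z_j|=a$ or $|z_i-z_j|>b$. $\mathrm{Hess}H(\mathbf x)=(\partial^2H/\partial x_i^\alpha\partial x_j^\beta)$ and $(\mathbf h,\mathrm{Hess}H(\mathbf x)\mathbf h)=\sum_{i,j}\sum_{\alpha,\beta}\frac{\partial^2H}{\partial x_i^\alpha\partial x_j^\beta}(\mathbf x)h_i^\alpha h_j^\beta$. *)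

(* Defs.v *)
From Stdlib Require Import Reals Lra.
From Coquelicot Require Import Coquelicot.
Open Scope R_scope.

Fixpoint rsum (n : nat) (f : nat -> R) : R :=
  match n with
  | O => 0
  | S m => rsum m f + f m
  end.

(* A configuration (x_i)_{i<N} in (R^d)^N is encoded as x : nat -> nat -> R,
   x i alpha = alpha-th coordinate of the i-th particle (i < N, alpha < d). *)
Definition config := nat -> nat -> R.

Definition dotd (d : nat) (u v : nat -> R) : R := rsum d (fun al => u al * v al).
Definition normd (d : nat) (v : nat -> R) : R := sqrt (dotd d v v).

Definition diffv (x : config) (i j : nat) : nat -> R := fun al => x i al - x j al.

Definition Hpot (U : R -> R) (N d : nat) (x : config) : R :=
  rsum N (fun j => rsum j (fun i => U (normd d (diffv x i j)))).

Definition upd (x : config) (i al : nat) (t : R) : config :=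
  fun k be => if andb (Nat.eqb k i) (Nat.eqb be al) then t else x k be.

Definition pderiv (i al : nat) (F : config -> R) (x : config) : R :=
  Derive (fun t => F (upd x i al t)) (x i al).

Definition hess (F : config -> R) (x : config) (i al j be : nat) : R :=
  pderiv i al (pderiv j be F) x.

Definition hess_form (N d : nat) (F : config -> R) (x h : config) : R :=
  rsum N (fun i => rsum N (fun j => rsum d (fun al => rsum d (fun be =>
    hess F x i al j be * h i al * h j be)))).

(* b = inf { r > 0 : U(s) = 0 for all s > r }  (in Rbar; +oo if the set is empty) *)
Definition b_of (U : R -> R) : Rbar :=
  Glb_Rbar (fun r => 0 < r /\ forall s, r < s -> U s = 0).

Definition crystal (U : R -> R) (a : R) (N d : nat) (z : config) : Prop :=
  forall i j, (i < N)%nat -> (j < N)%nat -> i <> j ->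
    normd d (diffv z i j) = a \/ Rbar_lt (b_of U) (Finite (normd d (diffv z i j))).

Definition bond_sum (a : R) (N d : nat) (z h : config) : R :=
  rsum N (fun j => rsum j (fun i =>
    if Req_EM_T (normd d (diffv z i j)) a
    then (dotd d (diffv h i j) (diffv z i j)) ^ 2 else 0)).

(* Main.v *)
Require Import Defs.
From Stdlib Require Import Reals Lra Lia Classical.
From Coquelicot Require Import Coquelicot.
Open Scope R_scope.

Lemma rsum_ext n f g : (forall m, (m < n)%nat -> f m = g m) -> rsum n f = rsum n g.
Proof. induction n; simpl; intros H; auto. rewrite IHn by (intros; apply H; lia). rewrite H by lia. reflexivity. Qed.
Lemma rsum_plus n f g : rsum n (fun m => f m + g m) = rsum n f + rsum n g.
Proof. induction n; simpl; [ring| rewrite IHn; ring]. Qed.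
Lemma rsum_minus n f g : rsum n (fun m => f m - g m) = rsum n f - rsum n g.
Proof. induction n; simpl; [ring| rewrite IHn; ring]. Qed.
Lemma rsum_scal n c f : rsum n (fun m => c * f m) = c * rsum n f.
Proof. induction n; simpl; [ring| rewrite IHn; ring]. Qed.
Lemma rsum_scalr n c f : rsum n (fun m => f m * c) = rsum n f * c.
Proof. induction n; simpl; [ring| rewrite IHn; ring]. Qed.
Lemma rsum_zero n : rsum n (fun _ => 0) = 0.
Proof. induction n; simpl; [ring| rewrite IHn; ring]. Qed.
Lemma rsum_delta n k f : (k < n)%nat -> rsum n (fun m => if m =? k then f m else 0) = f k.
Proof.
  induction n; intros Hk; [lia|]. simpl. destruct (Nat.eq_dec k n).
  - subst. rewrite Nat.eqb_refl. rewrite rsum_ext with (g := fun _ => 0). rewrite rsum_zero; ring.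
    intros m Hm. destruct (Nat.eqb_spec m n); [lia|auto].
  - rewrite IHn by lia. destruct (Nat.eqb_spec n k); [lia| ring].
Qed.
Lemma rsum_comm n p f : rsum n (fun x => rsum p (fun y => f x y)) = rsum p (fun y => rsum n (fun x => f x y)).
Proof. induction n; simpl. symmetry; apply rsum_zero. rewrite IHn, <- rsum_plus. reflexivity. Qed.
Lemma rsum_nonneg n f : (forall m, (m<n)%nat -> 0 <= f m) -> 0 <= rsum n f.
Proof. induction n; simpl; intros H. lra. assert (0 <= f n) by (apply H; lia). assert (0 <= rsum n f) by (apply IHn; intros; apply H; lia). lra. Qed.

Lemma is_derive_rsum n (f : nat -> R -> R) df x :
  (forall m, (m < n)%nat -> is_derive (f m) x (df m)) ->
  is_derive (fun s => rsum n (fun m => f m s)) x (rsum n df).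
Proof.
  induction n; simpl; intros H.
  - apply (is_derive_const (V := R_NormedModule) 0 x).
  - apply (is_derive_plus (fun s => rsum n (fun m => f m s)) (f n)).
    apply IHn; intros; apply H; lia. apply H; lia.
Qed.

Definition PSm N (G : nat -> nat -> R) := rsum N (fun l => rsum l (fun k => G k l)).
Lemma PSm_swap n N F : rsum n (fun x => PSm N (F x)) = PSm N (fun k l => rsum n (fun x => F x k l)).
Proof. unfold PSm. rewrite rsum_comm. apply rsum_ext; intros. apply rsum_comm. Qed.
Lemma PSm_scalr N G c : PSm N G * c = PSm N (fun k l => G k l * c).
Proof. unfold PSm. rewrite <- rsum_scalr. apply rsum_ext; intros. now rewrite <- rsum_scalr. Qed.
Lemma PSm_scal N G c : c * PSm N G = PSm N (fun k l => c * G k l).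
Proof. unfold PSm. rewrite <- rsum_scal. apply rsum_ext; intros. now rewrite <- rsum_scal. Qed.

Definition sg (i k l : nat) : R := (if i =? k then 1 else 0) - (if i =? l then 1 else 0).

Lemma sg_sum N k l f : (k < N)%nat -> (l < N)%nat -> rsum N (fun i => sg i k l * f i) = f k - f l.
Proof.
  intros. rewrite rsum_ext with (g := fun i => (if i =? k then f i else 0) - (if i =? l then f i else 0)).
  rewrite rsum_minus, !rsum_delta by auto. ring.
  intros; unfold sg; destruct (m =? k), (m =? l); ring.
Qed.

Definition qd d (y : config) k l := dotd d (diffv y k l) (diffv y k l).

Lemma diffv_upd y i al t k l m : k <> l ->
  diffv (upd y i al t) k l m = diffv y k l m + sg i k l * (if m =? al then 1 else 0) * (t - y i al).
Proof.
  intros Hkl. unfold diffv, upd, sg.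
  destruct (Nat.eqb_spec k i), (Nat.eqb_spec l i), (Nat.eqb_spec m al), (Nat.eqb_spec i k), (Nat.eqb_spec i l);
    subst; simpl; try lia; ring.
Qed.

Lemma q_upd d y i al t k l : k <> l -> (al < d)%nat ->
  qd d (upd y i al t) k l = qd d y k l + 2 * sg i k l * diffv y k l al * (t - y i al)
     + sg i k l ^ 2 * (t - y i al) ^ 2.
Proof.
  intros Hkl Hal. unfold qd, dotd.
  rewrite rsum_ext with (g := fun m => diffv y k l m * diffv y k l m +
     (if m =? al then 2 * sg i k l * diffv y k l m * (t - y i al) + sg i k l ^ 2 * (t - y i al) ^ 2 else 0)).
  rewrite rsum_plus. rewrite (rsum_delta d al (fun m => 2 * sg i k l * diffv y k l m * (t - y i al) + sg i k l ^ 2 * (t - y i al) ^ 2)) by auto. ring.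
  intros m Hm. rewrite diffv_upd by auto. destruct (m =? al); ring.
Qed.

Lemma key1 (U : R -> R) q w s s0 : (forall x, ex_derive U x) -> 0 < q ->
  is_derive (fun t => U (sqrt (q + 2*s*w*(t-s0) + s^2*(t-s0)^2))) s0
    (Derive U (sqrt q) * (s*w) / sqrt q).
Proof.
  intros HU Hq.
  assert (E : q + 2*s*w*(s0-s0) + s^2*(s0-s0)^2 = q) by ring.
  auto_derive; rewrite ?Rplus_opp_r, ?Rmult_0_l, ?Rmult_0_r, ?Rplus_0_r, ?Rmult_0_l, ?Rmult_0_r, ?Rplus_0_r.
  - split; [apply HU| split; auto].
  - assert (0 < sqrt q) by (apply sqrt_lt_R0; auto). change (fun x : R => U x) with U. field. lra.
Qed.

Lemma key2 (U : R -> R) q v w si sj dl t0 : (forall x, ex_derive U x) -> (forall x, ex_derive (Derive U) x) ->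
  0 < q -> Derive U (sqrt q) = 0 ->
  is_derive (fun t => Derive U (sqrt (q + 2*si*v*(t-t0) + si^2*(t-t0)^2)) * (sj * (w + si*dl*(t-t0)))
       / sqrt (q + 2*si*v*(t-t0) + si^2*(t-t0)^2)) t0
    (si * sj * (Derive (Derive U) (sqrt q) / q) * v * w).
Proof.
  intros HU HDU Hq H0.
  assert (E : q + 2*si*v*(t0-t0) + si^2*(t0-t0)^2 = q) by ring.
  auto_derive; rewrite ?Rplus_opp_r, ?Rmult_0_l, ?Rmult_0_r, ?Rplus_0_r, ?Rmult_0_l, ?Rmult_0_r, ?Rplus_0_r.
  all: assert (0 < sqrt q) by (apply sqrt_lt_R0; auto).
  all: try (repeat split; auto; try lra; apply HDU).
    change (fun x : R => Derive U x) with (Derive U). rewrite H0.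
    assert (Hr : q = sqrt q * sqrt q) by (rewrite sqrt_sqrt; lra).
    set (r := sqrt q) in *. rewrite Hr. field. lra.
Qed.

Lemma FD (U : R -> R) d y k l j be : (forall x, ex_derive U x) -> k <> l -> (be < d)%nat -> 0 < qd d y k l ->
  is_derive (fun s => U (normd d (diffv (upd y j be s) k l))) (y j be)
    (Derive U (sqrt (qd d y k l)) * (sg j k l * diffv y k l be) / sqrt (qd d y k l)).
Proof.
  intros HU Hkl Hbe Hq.
  eapply is_derive_ext; [| apply (key1 U (qd d y k l) (diffv y k l be) (sg j k l) (y j be)); auto].
  intros t; simpl. unfold normd.
  change (dotd d (diffv (upd y j be t) k l) (diffv (upd y j be t) k l)) with (qd d (upd y j be t) k l).
  rewrite q_upd; auto.
Qed.

Lemma pderivH (U : R -> R) N d y j be : (forall x, ex_derive U x) -> (be < d)%nat ->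
  (forall l k, (l < N)%nat -> (k < l)%nat -> 0 < qd d y k l) ->
  pderiv j be (Hpot U N d) y = PSm N (fun k l => Derive U (sqrt (qd d y k l)) * (sg j k l * diffv y k l be) / sqrt (qd d y k l)).
Proof.
  intros HU Hbe Hq. unfold pderiv, Hpot, PSm. apply is_derive_unique.
  apply is_derive_rsum. intros l Hl. apply is_derive_rsum. intros k Hk. apply FD; auto; lia.
Qed.

Lemma loc_pos q c e t0 : 0 < q -> locally t0 (fun t => 0 < q + c*(t-t0) + e*(t-t0)^2).
Proof.
  intros Hq.
  assert (Hc : continuous (fun t => q + c*(t-t0) + e*(t-t0)^2) t0).
  { apply (ex_derive_continuous (K:=R_AbsRing) (V:=R_NormedModule)). auto_derive. auto. }
  apply (Hc (fun u => 0 < u)). apply open_gt.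
  replace (q + c*(t0-t0) + e*(t0-t0)^2) with q by ring. auto.
Qed.

Lemma locally_forall_lt (x : R) n (P : nat -> R -> Prop) :
  (forall m, (m < n)%nat -> locally x (P m)) -> locally x (fun t => forall m, (m < n)%nat -> P m t).
Proof.
  induction n; intros H.
  - apply filter_forall. intros; lia.
  - apply filter_imp with (fun t => (forall m, (m < n)%nat -> P m t) /\ P n t).
    + intros t [H1 H2] m Hm. destruct (Nat.eq_dec m n); [subst; auto| apply H1; lia].
    + apply filter_and. apply IHn; intros; apply H; lia. apply H; lia.
Qed.

Lemma HessH (U : R -> R) N d z i al j be : (forall x, ex_derive U x) -> (forall x, ex_derive (Derive U) x) ->
  (al < d)%nat -> (be < d)%nat ->
  (forall l k, (l < N)%nat -> (k < l)%nat -> 0 < qd d z k l /\ Derive U (sqrt (qd d z k l)) = 0) ->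
  hess (Hpot U N d) z i al j be = PSm N (fun k l => sg i k l * sg j k l *
     (Derive (Derive U) (sqrt (qd d z k l)) / qd d z k l) * diffv z k l al * diffv z k l be).
Proof.
  intros HU HDU Hal Hbe Hz. unfold hess. unfold pderiv at 1. apply is_derive_unique.
  set (t0 := z i al).
  set (F := fun k l t => Derive U (sqrt (qd d z k l + 2*sg i k l*diffv z k l al*(t-t0) + sg i k l^2*(t-t0)^2))
     * (sg j k l * (diffv z k l be + sg i k l*(if be =? al then 1 else 0)*(t-t0)))
     / sqrt (qd d z k l + 2*sg i k l*diffv z k l al*(t-t0) + sg i k l^2*(t-t0)^2)).
  apply is_derive_ext_loc with (f := fun t => PSm N (fun k l => F k l t)).
  - assert (Hloc : locally t0 (fun t => forall l, (l < N)%nat -> forall k, (k < l)%nat ->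
        0 < qd d z k l + 2*sg i k l*diffv z k l al*(t-t0) + sg i k l^2*(t-t0)^2)).
    { apply locally_forall_lt. intros l Hl. apply locally_forall_lt. intros k Hk.
      apply loc_pos. apply Hz; auto. }
    eapply filter_imp; [|exact Hloc]. intros t Ht. simpl.
    rewrite pderivH; auto.
    + unfold PSm. apply rsum_ext; intros l Hl. apply rsum_ext; intros k Hk. unfold F.
      rewrite q_upd, diffv_upd by lia. reflexivity.
    + intros l k Hl Hk. rewrite q_upd by lia. apply Ht; auto.
  - unfold PSm. apply is_derive_rsum. intros l Hl. apply is_derive_rsum. intros k Hk.
    unfold F. apply key2; auto; apply Hz; auto.
Qed.

Lemma Da_zero (U : R -> R) a : (forall x, ex_derive U x) -> 0 < a -> (forall r, 0 <= r -> U a <= U r) ->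
  Derive U a = 0.
Proof.
  intros HU Ha Hmin.
  assert (Hd : derivable_pt_lim U a (Derive U a)) by (apply is_derive_Reals; apply Derive_correct; apply HU).
  pose (pr := exist (fun l => derivable_pt_lim U a l) (Derive U a) Hd : derivable_pt U a).
  change (Derive U a) with (derive_pt U a pr).
  apply (deriv_minimum U 0 (2*a) a pr); try lra.
  intros x Hx _. apply Hmin. lra.
Qed.

Lemma vanish (U : R -> R) r r0 : r < r0 -> (forall s, r < s -> U s = 0) ->
  Derive U r0 = 0 /\ Derive (Derive U) r0 = 0.
Proof.
  intros Hr HU.
  assert (H1 : forall x, r < x -> Derive U x = 0).
  { intros x Hx. rewrite (Derive_ext_loc U (fun _ => 0)). apply Derive_const.
    apply (filter_imp (fun u => r < u)). intros; apply HU; auto. apply open_gt. auto. }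
  split. apply H1; auto.
  rewrite (Derive_ext_loc (Derive U) (fun _ => 0)). apply Derive_const.
  apply (filter_imp (fun u => r < u)). intros; apply H1; auto. apply open_gt. auto.
Qed.

Lemma b_lt (U : R -> R) r0 : Rbar_lt (b_of U) (Finite r0) ->
  exists r, 0 < r /\ r < r0 /\ forall s, r < s -> U s = 0.
Proof.
  intros Hb. apply NNPP. intros Hn.
  destruct (Glb_Rbar_correct (fun r => 0 < r /\ forall s, r < s -> U s = 0)) as [_ Hg].
  assert (Hlb : is_lb_Rbar (fun r => 0 < r /\ forall s, r < s -> U s = 0) (Finite r0)).
  { intros x [Hx1 Hx2]. simpl. destruct (Rle_dec r0 x); auto.
    exfalso; apply Hn. exists x. repeat split; auto; lra. }
  specialize (Hg _ Hlb). unfold b_of in Hb.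
  apply (Rbar_lt_not_le _ _ Hb Hg).
Qed.

Lemma PSm_swap4 N n1 n2 n3 n4 F :
  rsum n1 (fun a => rsum n2 (fun b => rsum n3 (fun c => rsum n4 (fun e => PSm N (F a b c e))))) =
  PSm N (fun k l => rsum n1 (fun a => rsum n2 (fun b => rsum n3 (fun c => rsum n4 (fun e => F a b c e k l))))).
Proof.
  transitivity (rsum n1 (fun a => rsum n2 (fun b => rsum n3 (fun c => PSm N (fun k l => rsum n4 (fun e => F a b c e k l)))))).
  { apply rsum_ext; intros; apply rsum_ext; intros; apply rsum_ext; intros. apply PSm_swap. }
  transitivity (rsum n1 (fun a => rsum n2 (fun b => PSm N (fun k l => rsum n3 (fun c => rsum n4 (fun e => F a b c e k l)))))).
  { apply rsum_ext; intros; apply rsum_ext; intros. apply (PSm_swap n3 N (fun c k l => rsum n4 (fun e => F _ _ c e k l))). }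
  transitivity (rsum n1 (fun a => PSm N (fun k l => rsum n2 (fun b => rsum n3 (fun c => rsum n4 (fun e => F a b c e k l)))))).
  { apply rsum_ext; intros. apply (PSm_swap n2 N (fun b k l => rsum n3 (fun c => rsum n4 (fun e => F _ b c e k l)))). }
  apply (PSm_swap n1 N (fun a k l => rsum n2 (fun b => rsum n3 (fun c => rsum n4 (fun e => F a b c e k l))))).
Qed.

Lemma inner N d k l K (v : nat -> R) (h : config) : (k < N)%nat -> (l < N)%nat ->
  rsum N (fun i => rsum N (fun j => rsum d (fun al => rsum d (fun be =>
     sg i k l * sg j k l * K * v al * v be * h i al * h j be)))) = K * (dotd d (diffv h k l) v) ^ 2.
Proof.
  intros Hk Hl. set (P := fun i => rsum d (fun al => v al * h i al)).
  transitivity (rsum N (fun i => sg i k l * rsum N (fun j => sg j k l * (K * P i * P j)))).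
  { apply rsum_ext; intros i _. rewrite <- rsum_scal. apply rsum_ext; intros j _.
    rewrite rsum_ext with (g := fun al => (sg i k l * sg j k l * K * v al * h i al) * P j).
    rewrite rsum_scalr.
    rewrite rsum_ext with (g := fun al => (sg i k l * sg j k l * K) * (v al * h i al)).
    rewrite rsum_scal. unfold P. ring.
    intros; ring.
    intros al _. unfold P. rewrite <- rsum_scal. apply rsum_ext; intros; ring. }
  rewrite rsum_ext with (g := fun i => sg i k l * (K * P i * P k - K * P i * P l)).
  rewrite (sg_sum N k l (fun i => K * P i * P k - K * P i * P l)) by auto.
  replace (dotd d (diffv h k l) v) with (P k - P l). ring.
  unfold P, dotd, diffv. rewrite <- rsum_minus. apply rsum_ext; intros; ring.
  intros i _. rewrite (sg_sum N k l (fun j => K * P i * P j)) by auto. reflexivity.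
Qed.

Theorem lemma2p1 (d N : nat) (U : R -> R) (a : R) (z h : config) :
  (1 <= d)%nat ->
  (forall k x, (k <= 3)%nat -> ex_derive_n U k x) ->
  (forall x, continuous (Derive_n U 3) x) ->
  (exists M, forall x, M < Rabs x -> U x = 0) ->
  (forall x, U (- x) = U x) ->
  0 < a ->
  (forall r, 0 <= r -> U a <= U r) ->
  (forall r, 0 <= r -> U r <= U a -> r = a) ->
  0 < Derive_n U 2 a ->
  crystal U a N d z ->
  hess_form N d (Hpot U N d) z h
    = Derive_n U 2 a / a ^ 2 * bond_sum a N d z h
  /\ 0 <= hess_form N d (Hpot U N d) z h.
Proof.
  intros Hd Hder Hcont Hsupp Heven Ha Hmin Huniq Hc Hcr.
  assert (HU : forall x, ex_derive U x) by (intros x; exact (Hder 1%nat x ltac:(lia))).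
  assert (HDU : forall x, ex_derive (Derive U) x) by (intros x; exact (Hder 2%nat x ltac:(lia))).
  assert (Da : Derive U a = 0) by (apply Da_zero; auto).
  assert (Hpair : forall l k, (l < N)%nat -> (k < l)%nat ->
     0 < qd d z k l /\ Derive U (sqrt (qd d z k l)) = 0 /\
     forall X, Derive (Derive U) (sqrt (qd d z k l)) / qd d z k l * X =
        Derive_n U 2 a / a ^ 2 * (if Req_EM_T (normd d (diffv z k l)) a then X else 0)).
  { intros l k Hl Hk.
    assert (Hq0 : 0 <= qd d z k l).
    { unfold qd, dotd. apply rsum_nonneg. intros; apply Rle_0_sqr. }
    assert (Hsq : forall r, 0 < r -> sqrt (qd d z k l) = r -> 0 < qd d z k l).
    { intros r Hr Hs. destruct (Rle_lt_or_eq_dec _ _ Hq0) as [|E]; auto.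
      rewrite <- E, sqrt_0 in Hs. lra. }
    change (normd d (diffv z k l)) with (sqrt (qd d z k l)).
    destruct (Req_EM_T (sqrt (qd d z k l)) a) as [E|E].
    - assert (Hq : 0 < qd d z k l) by (apply (Hsq a); auto).
      repeat split; auto. rewrite E; auto.
      intros X. rewrite E. replace (qd d z k l) with (a ^ 2). reflexivity.
      rewrite <- E. simpl. rewrite Rmult_1_r, sqrt_sqrt; lra.
    - destruct (Hcr k l) as [E'|Hb]; try lia.
      + change (normd d (diffv z k l)) with (sqrt (qd d z k l)) in E'. contradiction.
      + change (normd d (diffv z k l)) with (sqrt (qd d z k l)) in Hb. destruct (b_lt U _ Hb) as [r [Hr0 [Hr HUr]]].
        destruct (vanish U r _ Hr HUr) as [V1 V2].
        assert (Hq : 0 < qd d z k l) by (apply (Hsq (sqrt (qd d z k l))); auto; lra).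
        repeat split; auto. intros X. rewrite V2. unfold Rdiv. ring. }
  assert (Heq : hess_form N d (Hpot U N d) z h =
     PSm N (fun k l => Derive_n U 2 a / a ^ 2 *
        (if Req_EM_T (normd d (diffv z k l)) a then (dotd d (diffv h k l) (diffv z k l)) ^ 2 else 0))).
  { unfold hess_form.
    transitivity (rsum N (fun i => rsum N (fun j => rsum d (fun al => rsum d (fun be =>
       PSm N (fun k l => sg i k l * sg j k l *
         (Derive (Derive U) (sqrt (qd d z k l)) / qd d z k l) * diffv z k l al * diffv z k l be
          * h i al * h j be)))))).
    { apply rsum_ext; intros i Hi; apply rsum_ext; intros j Hj; apply rsum_ext; intros al Hal;
        apply rsum_ext; intros be Hbe.
      rewrite (HessH U N d z i al j be); auto.
      - rewrite !PSm_scalr. reflexivity.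
      - intros l k Hl Hk. destruct (Hpair l k Hl Hk) as [? [? ?]]; auto. }
    rewrite PSm_swap4. unfold PSm. apply rsum_ext; intros l Hl; apply rsum_ext; intros k Hk.
    rewrite inner by lia. apply Hpair; auto. }
  assert (Hb : bond_sum a N d z h = PSm N (fun k l =>
        (if Req_EM_T (normd d (diffv z k l)) a then (dotd d (diffv h k l) (diffv z k l)) ^ 2 else 0)))
    by reflexivity.
  rewrite Hb. rewrite PSm_scal. rewrite <- Heq. split; auto.
  rewrite Heq, <- PSm_scal. apply Rmult_le_pos.
  - unfold Rdiv. apply Rmult_le_pos. lra. left. apply Rinv_0_lt_compat. apply pow_lt; auto.
  - unfold PSm. apply rsum_nonneg; intros; apply rsum_nonneg; intros.
    destruct Req_EM_T. apply pow2_ge_0. lra.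
Qed.
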